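(* (Perfect completeness.) Consider the card-based Makaro protocol described in the context. If the prover $P$ knows a solution of the given Makaro puzzle and places the cell cards according to it, and the protocol is executed as specified, then the verifier $V$ always accepts.
   Context: Makaro puzzle: a rectangular grid of white and black cells. The white cells are partitioned into polyominoes called rooms; the size of a room is its number of cells. Some white cells already contain a number. Each black cell contains an arrow pointing to one of its (horizontally or vertically) adjacent white cells. A solution assigns a number to every empty white cell such that: (room condition) each room of size $p$ contains exactly the numbers $1,2,\dots,p$; (neighbor condition) two orthogonally adjacent white cells in different rooms contain different numbers; (arrow condition) for each black cell, the white cell its arrow points to contains the unique largest number among the (up to four) numbers in the white cells orthogonally adjacent to that black cell. Let $k$ be the size of the largest room. Cards: all cards have distinct front faces and identical backs. For each room $R$ of size $p$ there are cell cards $R_1,\dots,R_p$ (cards of different rooms are all distinct); there are helping cards $h_1,\dots,h_k$ and encoding cards $a_i,b_i,c_i,d_i$ for $i=1,\dots,2k-1$. A pile-scramble shuffle applied to a matrix of face-down cards permutes its columns by a uniformly random permutation unknown to all parties; a pile-shifting shuffle permutes the columns by a uniformly random cyclic shift unknown to all parties. Protocol. Setup: on each white cell of room $R$ containing (or, for empty cells, secretly assigned by $P$) the number $v$, $P$ places the face-down card $R_v$ (publicly for prefilled cells, secretly for the others). Room check, for each room $R$ of size $p$: put its cell cards in a fixed order in Row 1 of a $2\times p$ matrix and $h_1,\dots,h_p$ in Row 2; pile-scramble; reveal Row 1 and reject unless it is a permutation of $R_1,\dots,R_p$; turn these cards face down, pile-scramble again, reveal Row 2, rearrange the columns so Row 2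 reads $h_1,\dots,h_p$, and return the Row 1 cards to their cells. Conversion (cell with card $R_x$ in room $R$ of size $p$, target length $m\ge p$, card set $X\in\{a,b,c,d\}$): put the cell cards of $R$ in a fixed order in Row 1 of a matrix, with $R_x$ in column $i$; $h_1,\dots,h_p$ in Row 2; $X_1$ in Row 3, column $i$; $P$ secretly forms a uniformly random permutation $S$ of $X_2,\dots,X_m$ and fills the remaining $p-1$ cells of Row 3 from left to right with the first $p-1$ cards of $S$. Pile-scramble the $3\times p$ matrix; reveal Row 1 and rearrange columns so Row 1 reads $R_1,\dots,R_p$; remove Row 3 as a sequence $T$ and append the remaining $m-p$ cards of $S$ to obtain a face-down sequence of length $m$ (the encoding sequence). Then turn Row 1 face down, pile-scramble, reveal Row 2, rearrange so it reads $h_1,\dots,h_p$, and return the cell cards to their cells. Neighbor check, for each pair of adjacent white cells in different rooms (room sizes $p,q$, $m=\max(p,q)$): convert the first cell with set $a$ and the second with set $b$, both with length $m$; place the two sequences as Rows 1 and 2 of a $2\times m$ matrix; pile-scramble; reveal Row 1; let $a_1$ be in column $i$; reveal the Row 2 card in column $i$ and reject if it is $b_1$. Arrow check, for each black cell: let the pointed-to cell and the other (up to three) adjacent white cells be considered, and let $m$ be the maximum room size among them; convert the pointed-to cell with set $a$ and the others with sets $b,c,d$, all with length $2m-1$; place them as rows of a matrix (Row 1 from set $a$); apply a pile-shifting shuffle; reveal Row 1, let $a_1$ be in column $i$; reveal the cards of the other rows in columns $i,i+1,\dots,i+m-1$ (indices modulo $2m-1$) and reject if any of them is $b_1$, $c_1$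 or $d_1$. $V$ accepts if no check rejects. *)

(* Defs.v *)
From HB Require Import structures.
From mathcomp Require Import all_boot perm.
Set Implicit Arguments. Unset Strict Implicit. Unset Printing Implicit Defensive.

(* A cell is a pair (row, column) of natural numbers; rows grow downwards. *)
Definition cell := (nat * nat)%type.

Inductive dir := Up | Down | Left | Right.
Definition dirs := [:: Up; Down; Left; Right].

(* A cell is white and belongs to the room with the given label, or is
   black and carries an arrow in the given direction. *)
Inductive kind := White of nat | Black of dir.

Record puzzle := Puzzle {
  rows : nat;
  cols : nat;
  kindf : cell -> kind;          (* only meaningful on cells in the grid *)
  clue : cell -> option nat
}.

Definition in_grid (P : puzzle) (c : cell) := (c.1 < rows P) && (c.2 < cols P).

Definition cells (P : puzzle) : seq cell :=
  [seq (i, j) | i <- iota 0 (rows P), j <- iota 0 (cols P)].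

Definition step (c : cell) (d : dir) : option cell :=
  match d with
  | Up => if c.1 is i.+1 then Some (i, c.2) else None
  | Down => Some (c.1.+1, c.2)
  | Left => if c.2 is j.+1 then Some (c.1, j) else None
  | Right => Some (c.1, c.2.+1)
  end.

Definition nbrs (P : puzzle) (c : cell) : seq cell :=
  [seq d <- pmap (step c) dirs | in_grid P d].

Definition roomlab (P : puzzle) (c : cell) : option nat :=
  if in_grid P c then (if kindf P c is White r then Some r else None) else None.

Definition is_white (P : puzzle) (c : cell) : bool := roomlab P c != None.
Definition is_black (P : puzzle) (c : cell) : bool :=
  in_grid P c && (if kindf P c is Black _ then true else false).

Definition room_cells (P : puzzle) (r : nat) : seq cell :=
  [seq c <- cells P | roomlab P c == Some r].
Definition room_size (P : puzzle) (r : nat) : nat := size (room_cells P r).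
Definition rsize (P : puzzle) (c : cell) : nat := room_size P (odflt 0 (roomlab P c)).

Definition rooms (P : puzzle) : seq nat := undup (pmap (roomlab P) (cells P)).

Inductive room_path (P : puzzle) (r : nat) : cell -> cell -> Prop :=
| rp_refl c : roomlab P c = Some r -> room_path P r c c
| rp_step c d e : roomlab P c = Some r -> d \in nbrs P c ->
                  room_path P r d e -> room_path P r c e.

Definition wf_puzzle (P : puzzle) : Prop :=
  (forall c dr, in_grid P c -> kindf P c = Black dr ->
     exists w, step c dr = Some w /\ is_white P w) /\
  (forall r c d, roomlab P c = Some r -> roomlab P d = Some r -> room_path P r c d) /\
  (forall c v, clue P c = Some v -> is_white P c).

(* A solution: a number for every cell (irrelevant on black cells). *)
Definition is_solution (P : puzzle) (sol : cell -> nat) : Prop :=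
  (forall c v, clue P c = Some v -> sol c = v) /\
  (forall r, r \in rooms P ->
     perm_eq [seq sol c | c <- room_cells P r] (iota 1 (room_size P r))) /\
  (forall c d, is_white P c -> is_white P d -> d \in nbrs P c ->
     roomlab P c != roomlab P d -> sol c <> sol d) /\
  (forall c dr w, in_grid P c -> kindf P c = Black dr -> step c dr = Some w ->
     forall d, d \in nbrs P c -> is_white P d -> d != w -> sol d < sol w).

Inductive letter := La | Lb | Lc | Ld.

(* RC r v = cell card R_v of room r; HC i = helping card h_i;
   EC X i = encoding card X_i for X in {a,b,c,d}. *)
Inductive card := RC of nat & nat | HC of nat | EC of letter & nat.

Definition letter_code (x : letter) : nat :=
  match x with La => 0 | Lb => 1 | Lc => 2 | Ld => 3 end.
Definition code_letter (n : nat) : letter :=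
  match n with 0 => La | 1 => Lb | 2 => Lc | _ => Ld end.

Definition card_code (c : card) : nat * nat * nat :=
  match c with
  | RC r v => (0, r, v)
  | HC i => (1, i, 0)
  | EC x i => ((letter_code x).+2, i, 0)
  end.
Definition code_card (t : nat * nat * nat) : option card :=
  match t with
  | (0, r, v) => Some (RC r v)
  | (1, i, _) => Some (HC i)
  | (n.+2, i, _) => Some (EC (code_letter n) i)
  end.
Lemma card_codeK : pcancel card_code code_card.
Proof. by case=> // [] []. Qed.
HB.instance Definition _ := Equality.copy card (pcan_type card_codeK).

Definition dcard : card := HC 0.

(* A matrix of face-down cards is a list of rows. *)
Definition mat := seq (seq card).

(* Every shuffle / secret random permutation is drawn from a
   "tape": the k-th random permutation of size n is [tape k n].  The k-th
   pile-shifting shuffle shifts by [shifts k] (modulo the number of columns).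
   "V always accepts" means: V accepts for every tape. *)
Definition tape_t := nat -> forall n : nat, 'S_n.

Definition permcols (p : nat) (s : 'S_p) (M : mat) : mat :=
  [seq [seq nth dcard row (s j) | j <- enum 'I_p] | row <- M].

Definition shiftcols (L s : nat) (M : mat) : mat :=
  [seq [seq nth dcard row ((j + s) %% L) | j <- iota 0 L] | row <- M].

(* publicly rearrange the columns so that (revealed) row k reads t *)
Definition rearr (k : nat) (t : seq card) (M : mat) : mat :=
  let r := nth [::] M k in
  [seq [seq nth dcard row (index x r) | x <- t] | row <- M].

Definition return_cards (cs : seq cell) (row : seq card) (pl : cell -> card)
  : cell -> card :=
  fun c => if c \in cs then nth dcard row (index c cs) else pl c.

(* state: the cards lying on the cells, and the tape counter *)
Definition state := ((cell -> card) * nat)%type.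

Definition Rrow (r p : nat) := [seq RC r v | v <- iota 1 p].
Definition Hrow (p : nat) := [seq HC i | i <- iota 1 p].

(* room check for room r; returns (no rejection, new state) *)
Definition room_check (P : puzzle) (tape : tape_t) (r : nat) (st : state)
  : bool * state :=
  let: (pl, k) := st in
  let cs := room_cells P r in
  let p := size cs in
  let M1 := permcols (tape k p) [:: map pl cs; Hrow p] in
  let ok := perm_eq (nth [::] M1 0) (Rrow r p) in
  let M3 := rearr 1 (Hrow p) (permcols (tape k.+1 p) M1) in
  (ok, (return_cards cs (nth [::] M3 0) pl, k.+2)).

(* conversion of the card on cell c, target length m, card set X *)
Definition convert (P : puzzle) (tape : tape_t) (c : cell) (X : letter) (m : nat)
  (st : state) : seq card * state :=
  let: (pl, k) := st in
  let r := odflt 0 (roomlab P c) in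
  let cs := room_cells P r in
  let p := size cs in
  let i := index c cs in
  (* P's secret uniformly random permutation of X_2, ..., X_m *)
  let S := [seq EC X (tape k m.-1 j).+2 | j <- enum 'I_(m.-1)] in
  let Row3 := [seq if j == i then EC X 1
                   else nth dcard S (if j < i then j else j.-1) | j <- iota 0 p] in
  let M1 := permcols (tape k.+1 p) [:: map pl cs; Hrow p; Row3] in
  let M2 := rearr 0 (Rrow r p) M1 in
  let enc := nth [::] M2 2 ++ drop p.-1 S in
  let M3 := rearr 1 (Hrow p)
              (permcols (tape k.+2 p) [:: nth [::] M2 0; nth [::] M2 1]) in
  (enc, (return_cards cs (nth [::] M3 0) pl, k.+3)).

Definition nbr_check (P : puzzle) (tape : tape_t) (cd : cell * cell) (st : state)
  : bool * state :=
  let m := maxn (rsize P cd.1) (rsize P cd.2) in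
  let: (ea, st1) := convert P tape cd.1 La m st in
  let: (eb, st2) := convert P tape cd.2 Lb m st1 in
  let: (pl2, k2) := st2 in
  let M := permcols (tape k2 m) [:: ea; eb] in
  let i := index (EC La 1) (nth [::] M 0) in
  (nth dcard (nth [::] M 1) i != EC Lb 1, (pl2, k2.+1)).

Fixpoint converts (P : puzzle) (tape : tape_t) (dl : seq (cell * letter)) (L : nat)
  (st : state) : seq (seq card) * state :=
  match dl with
  | [::] => ([::], st)
  | (d, X) :: dl' =>
      let: (e, st1) := convert P tape d X L st in
      let: (es, st2) := converts P tape dl' L st1 in
      (e :: es, st2)
  end.

Definition arrow_check (P : puzzle) (tape : tape_t) (shifts : nat -> nat)
  (c : cell) (st : state) : bool * state :=
  match kindf P c with
  | White _ => (true, st)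
  | Black dr =>
    let w := odflt c (step c dr) in
    let ds := [seq d <- nbrs P c | is_white P d & d != w] in
    let m := foldr maxn 0 (map (rsize P) (w :: ds)) in
    let L := (2 * m).-1 in
    let: (ea, st1) := convert P tape w La L st in
    let: (es, st2) := converts P tape (zip ds [:: Lb; Lc; Ld]) L st1 in
    let: (pl2, k2) := st2 in
    let M := shiftcols L (shifts k2) (ea :: es) in
    let i := index (EC La 1) (nth [::] M 0) in
    let bad := has (fun row => has (fun t =>
                 nth dcard row ((i + t) %% L) \in [:: EC Lb 1; EC Lc 1; EC Ld 1])
                 (iota 0 m)) (behead M) in
    (~~ bad, (pl2, k2.+1))
  end.

Fixpoint run_list {A : Type} (f : A -> state -> bool * state) (l : seq A)
  (st : state) : bool * state :=
  match l with
  | [::] => (true, st)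
  | x :: l' =>
      let: (b, st1) := f x st in
      let: (b', st2) := run_list f l' st1 in
      (b && b', st2)
  end.

(* unordered pairs of adjacent white cells in different rooms, each once *)
Definition nbr_pairs (P : puzzle) : seq (cell * cell) :=
  [seq cd <- [seq (c, d) | c <- cells P, d <- pmap (step c) [:: Down; Right]]
   | [&& is_white P cd.1, is_white P cd.2 & roomlab P cd.1 != roomlab P cd.2]].

Definition black_cells (P : puzzle) : seq cell := [seq c <- cells P | is_black P c].

Definition setup (P : puzzle) (sol : cell -> nat) : cell -> card :=
  fun c => if roomlab P c is Some r then RC r (sol c) else dcard.

Definition protocol (P : puzzle) (sol : cell -> nat) (tape : tape_t)
  (shifts : nat -> nat) : bool :=
  let: (b1, st1) := run_list (room_check P tape) (rooms P) (setup P sol, 0) in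
  let: (b2, st2) := run_list (nbr_check P tape) (nbr_pairs P) st1 in
  let: (b3, _) := run_list (arrow_check P tape shifts) (black_cells P) st2 in
  [&& b1, b2 & b3].

(* Main.v *)
Require Import Defs.
From mathcomp Require Import all_boot perm zify.
From Stdlib Require Import FunctionalExtensionality.
Set Implicit Arguments. Unset Strict Implicit. Unset Printing Implicit Defensive.

Lemma nth_enum_map (T : Type) (x : T) p (f : 'I_p -> T) (i : 'I_p) :
  nth x [seq f j | j <- enum 'I_p] i = f i.
Proof. by rewrite (nth_map i) ?size_enum_ord // nth_ord_enum. Qed.

Lemma row_enum (row : seq Defs.card) p : size row = p ->
  row = [seq nth dcard row (val j) | j <- enum 'I_p].
Proof.
move=> Hs; rewrite (map_comp (nth dcard row) val) val_enum_ord -Hs.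
by rewrite -[X in X = _](mkseq_nth dcard row).
Qed.

Lemma perm_row p (s : 'S_p) (row : seq Defs.card) : size row = p ->
  perm_eq [seq nth dcard row (s j) | j <- enum 'I_p] row.
Proof.
move=> Hs; rewrite {2}(row_enum Hs).
rewrite (map_comp (fun j : 'I_p => nth dcard row (val j)) s).
apply: perm_map.
apply: uniq_perm; first by rewrite (map_inj_uniq (@perm_inj _ s)) enum_uniq.
  exact: enum_uniq.
move=> x; rewrite mem_enum; apply/mapP; exists (s^-1 x)%g; rewrite ?mem_enum ?permKV //.
Qed.

Lemma rearr_permcols p (s : 'S_p) k t (M0 : mat) :
  all (fun row => size row == p) M0 -> k < size M0 -> uniq (nth [::] M0 k) ->
  rearr k t (permcols s M0) = rearr k t M0.
Proof.
move=> Hall Hk Hu; rewrite /rearr /permcols (nth_map [::]) //.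
set r0 := nth [::] M0 k.
have Hr0 : size r0 = p by apply/eqP; apply: (allP Hall); rewrite mem_nth.
set r' := [seq nth dcard r0 (s j) | j <- enum 'I_p].
have Hp : perm_eq r' r0 by apply: perm_row.
have Hu' : uniq r' by rewrite (perm_uniq Hp).
have Hs' : size r' = p by rewrite size_map size_enum_ord.
rewrite -map_comp; apply/eq_in_map => row Hrow /=.
have Hrs : size row = p by apply/eqP; apply: (allP Hall).
apply: eq_map => x.
case Hx: (x \in r0).
  have Hq : index x r0 < p by rewrite -Hr0 index_mem.
  pose o := Ordinal Hq.
  have Ex : nth dcard r' (s^-1 o)%g = x.
    by rewrite /r' nth_enum_map permKV /= nth_index.
  rewrite -{1}Ex index_uniq ?Hs' ?ltn_ord // nth_enum_map permKV //.
have Hx' : x \notin r' by rewrite (perm_mem Hp) Hx.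
rewrite memNindex // memNindex ?Hx // Hs' Hr0 !nth_default //.
  by rewrite Hrs.
by rewrite size_map size_enum_ord.
Qed.

Lemma rearr_self k (M0 : mat) :
  all (fun row => size row == size (nth [::] M0 k)) M0 -> uniq (nth [::] M0 k) ->
  rearr k (nth [::] M0 k) M0 = M0.
Proof.
move=> Hall Hu; rewrite /rearr.
set r0 := nth [::] M0 k.
rewrite -[RHS]map_id; apply/eq_in_map => row Hrow.
have Hrs : size row = size r0 by apply/eqP; apply: (allP Hall).
rewrite [X in map _ X](row_enum (erefl (size r0))) -map_comp /=.
transitivity [seq nth dcard row (val j) | j <- enum 'I_(size r0)]; last by rewrite -(row_enum Hrs).
apply: eq_map => j /=.
by rewrite index_uniq // ltn_ord.
Qed.

Lemma rearr_perm p k t (M0 : mat) :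
  all (fun row => size row == p) M0 -> k < size M0 -> uniq (nth [::] M0 k) ->
  perm_eq t (nth [::] M0 k) ->
  exists g : 'S_p, rearr k t M0 = permcols g M0.
Proof.
move=> Hall Hk Hu Hp.
set r0 := nth [::] M0 k in Hu Hp *.
have Hr0 : size r0 = p by apply/eqP; apply: (allP Hall); rewrite mem_nth.
have Ht : size t = p by rewrite (perm_size Hp).
have Htu : uniq t by rewrite (perm_uniq Hp).
have gP (j : 'I_p) : index (nth dcard t j) r0 < p.
  suff: index (nth dcard t j) r0 < size r0 by rewrite Hr0.
  by rewrite index_mem -(perm_mem Hp) mem_nth // Ht.
have ginj : injective (fun j => Ordinal (gP j)).
  move=> i j /(congr1 val) /= E.
  have : nth dcard r0 (index (nth dcard t i) r0) = nth dcard r0 (index (nth dcard t j) r0) by rewrite E.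
  rewrite !nth_index -?(perm_mem Hp) ?mem_nth ?Ht //.
  by move/eqP; rewrite nth_uniq ?Ht // => /eqP /val_inj.
exists (perm ginj); rewrite /rearr /permcols; apply: eq_map => row.
rewrite {1}(row_enum Ht) -map_comp; apply: eq_map => j /=.
by rewrite permE.
Qed.

Lemma return_self (cs : seq cell) (pl : cell -> Defs.card) :
  return_cards cs (map pl cs) pl = pl.
Proof.
apply: functional_extensionality => c; rewrite /return_cards.
case: ifP => // H; by rewrite (nth_map c) ?index_mem // nth_index.
Qed.

Section Puz.
Variables (P : puzzle) (sol : cell -> nat).
Hypothesis Hsol : is_solution P sol.

Lemma white_grid c : is_white P c -> in_grid P c.
Proof. by rewrite /is_white /roomlab; case: (in_grid P c). Qed.

Lemma grid_cells c : in_grid P c -> c \in cells P.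
Proof.
case: c => i j /andP [Hi Hj]; rewrite /cells.
by apply: (allpairs_f pair); rewrite mem_iota.
Qed.

Lemma mem_room c r : c \in room_cells P r -> roomlab P c = Some r.
Proof. by rewrite mem_filter => /andP [/eqP]. Qed.

Lemma white_room c : is_white P c ->
  exists r, [/\ roomlab P c = Some r, r \in rooms P & c \in room_cells P r].
Proof.
move=> Hw; have Hc := grid_cells (white_grid Hw).
move: Hw; rewrite /is_white; case E: (roomlab P c) => [r|] // _.
exists r; split => //.
  by rewrite /rooms mem_undup mem_pmap -E map_f.
by rewrite mem_filter E eqxx.
Qed.

Lemma setup_room r : map (setup P sol) (room_cells P r) = map (RC r) (map sol (room_cells P r)).
Proof.
rewrite -map_comp; apply/eq_in_map => c Hc /=.
by rewrite /setup (mem_room Hc).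
Qed.

Lemma room_perm r : r \in rooms P ->
  perm_eq (map (setup P sol) (room_cells P r)) (Rrow r (size (room_cells P r))).
Proof.
move=> Hr; rewrite setup_room /Rrow; apply: perm_map.
by case: Hsol => _ [H _]; apply: H.
Qed.

Lemma Rrow_uniq r p : uniq (Rrow r p).
Proof. by rewrite map_inj_uniq ?iota_uniq // => x y [->]. Qed.

Lemma Hrow_uniq p : uniq (Hrow p).
Proof. by rewrite map_inj_uniq ?iota_uniq // => x y [->]. Qed.

Lemma room_uniq r : r \in rooms P -> uniq (map (setup P sol) (room_cells P r)).
Proof. by move=> Hr; rewrite (perm_uniq (room_perm Hr)) Rrow_uniq. Qed.

Lemma sol_range r c : r \in rooms P -> c \in room_cells P r ->
  0 < sol c <= size (room_cells P r).
Proof.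
move=> Hr Hc; case: Hsol => _ [H _].
have : sol c \in iota 1 (room_size P r) by rewrite -(perm_mem (H r Hr)) map_f.
by rewrite mem_iota /room_size addnC addn1 ltnS.
Qed.

End Puz.

Section Puz.
Variables (P : puzzle) (sol : cell -> nat).
Hypothesis Hsol : is_solution P sol.

Lemma size_Hrow p : size (Hrow p) = p.
Proof. by rewrite size_map size_iota. Qed.

Lemma all_permcols p (s : 'S_p) (M : mat) : all (fun row => size row == p) (permcols s M).
Proof. by apply/allP => row /mapP [r _ ->]; rewrite size_map size_enum_ord. Qed.

Lemma two_rows p (a h : seq Defs.card) : size a = p -> size h = p -> uniq h ->
  forall (s : 'S_p), rearr 1 h (permcols s [:: a; h]) = [:: a; h].
Proof.
move=> Ha Hh Hu s.
rewrite rearr_permcols //=; last by rewrite Ha Hh !eqxx.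
apply: (@rearr_self 1 [:: a; h]) => //=.
by rewrite Ha Hh !eqxx.
Qed.

Lemma room_checkP tape r k : r \in rooms P ->
  room_check P tape r (setup P sol, k) = (true, (setup P sol, k.+2)).
Proof.
move=> Hr; rewrite /room_check.
set cs := room_cells P r; set p := size cs; set a := map _ cs.
have Ha : size a = p by rewrite size_map.
set s1 := tape k p; set s2 := tape k.+1 p.
have -> : perm_eq (nth [::] (permcols s1 [:: a; Hrow p]) 0) (Rrow r p).
  rewrite /permcols /=; apply: perm_trans (perm_row _ Ha) _.
  exact: room_perm.
have Hh : size (Hrow p) = p by rewrite size_Hrow.
rewrite rearr_permcols; last first.
- by rewrite /permcols /= (perm_uniq (perm_row _ Hh)) Hrow_uniq.
- by [].
- exact: all_permcols.
rewrite (@two_rows p a (Hrow p)) ?Hrow_uniq //= return_self //.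
Qed.

End Puz.

Section Puz.
Variables (P : puzzle) (sol : cell -> nat).
Hypothesis Hsol : is_solution P sol.

Definition encP (enc : seq Defs.card) (X : letter) (v : nat) :=
  nth dcard enc v.-1 = EC X 1 /\
  (forall q Y, nth dcard enc q = EC Y 1 -> Y = X /\ q = v.-1).

Lemma convertP tape c X m k : is_white P c ->
  exists enc, convert P tape c X m (setup P sol, k) = (enc, (setup P sol, k.+3)) /\
   encP enc X (sol c).
Proof.
move=> Hw; have [r [Hr Hrr Hc]] := white_room Hw.
rewrite /convert Hr [odflt _ _]/=.
set cs := room_cells P r; set p := size cs; set i := index c cs.
set a := map (setup P sol) cs.
set S := [seq EC X _ | j <- _].
set Row3 := [seq (if _ == i then _ else _) | j <- _].
set s1 := tape k.+1 p; set s2 := tape k.+2 p.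
have Ha : size a = p by rewrite size_map.
have Hh : size (Hrow p) = p by rewrite size_Hrow.
have H3 : size Row3 = p by rewrite size_map size_iota.
have Hall : all (fun row => size row == p) [:: a; Hrow p; Row3] by rewrite /= Ha Hh H3 eqxx.
have Hau : uniq a by apply: room_uniq.
rewrite rearr_permcols //.
have [g Eg] : exists g : 'S_p, rearr 0 (Rrow r p) [:: a; Hrow p; Row3] = permcols g [:: a; Hrow p; Row3].
  by apply: rearr_perm => //; rewrite perm_sym; apply: room_perm.
have -> : [:: nth [::] (rearr 0 (Rrow r p) [:: a; Hrow p; Row3]) 0;
              nth [::] (rearr 0 (Rrow r p) [:: a; Hrow p; Row3]) 1] = permcols g [:: a; Hrow p]
  by rewrite Eg.
rewrite rearr_permcols //; last first.
- by rewrite /permcols /= (perm_uniq (perm_row _ Hh)) Hrow_uniq.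
- exact: all_permcols.
rewrite (@two_rows p a (Hrow p)) ?Hrow_uniq // [nth _ _ 0]/= return_self.
eexists; split; first reflexivity.
have -> : nth [::] (rearr 0 (Rrow r p) [:: a; Hrow p; Row3]) 2 =
          [seq nth dcard Row3 (index x a) | x <- Rrow r p] by [].
have Hi : i < p by rewrite index_mem.
have Hai : nth dcard a i = RC r (sol c) by rewrite (nth_map c) ?index_mem // nth_index // /setup Hr.
have /andP [Hs0 Hsp] : 0 < sol c <= p by apply: sol_range.
have HR : forall q, q < p -> nth dcard (Rrow r p) q = RC r q.+1.
  by move=> q Hq; rewrite (nth_map 0) ?size_iota // nth_iota // add1n.
have HRs : size (Rrow r p) = p by rewrite size_map size_iota.
have H3n : forall j, j < p -> nth dcard Row3 j = if j == i then EC X 1 else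
           nth dcard S (if j < i then j else j.-1).
  by move=> j Hj; rewrite (nth_map 0) ?size_iota // nth_iota // add0n.
have HS : forall n Y, nth dcard S n <> EC Y 1.
  move=> n Y; case: (ltnP n (size S)) => Hn; last by rewrite nth_default.
  by move: (mem_nth dcard Hn) => /mapP [j _ ->].
have HRa : forall q, q < p -> index (nth dcard (Rrow r p) q) a < p.
  move=> q Hq; have Hm : nth dcard (Rrow r p) q \in a.
    by rewrite (perm_mem (room_perm Hsol Hrr)) mem_nth ?HRs.
  by move: Hm; rewrite -index_mem Ha.
split.
  rewrite nth_cat size_map HRs prednK // Hsp (nth_map dcard) ?HRs ?prednK //.
  by rewrite HR ?prednK // -Hai index_uniq ?Ha // H3n // eqxx.
move=> q Y; rewrite nth_cat size_map HRs; case: ifP => Hq; last first.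
  by rewrite nth_drop => /HS.
rewrite (nth_map dcard) ?HRs // H3n ?HRa //.
case: eqP => [E|_ /HS] //.
move=> [<-]; split => //.
have := congr1 (nth dcard a) E.
rewrite nth_index ?(perm_mem (room_perm Hsol Hrr)) ?mem_nth ?HRs // Hai HR //.
by case=> <-.
Qed.

End Puz.

Lemma nbr_core m (s : 'S_m) ea eb v1 v2 : 0 < v1 <= m -> 0 < v2 -> v1 != v2 ->
  encP ea La v1 -> encP eb Lb v2 ->
  nth dcard (nth [::] (permcols s [:: ea; eb]) 1)
     (index (EC La 1) (nth [::] (permcols s [:: ea; eb]) 0)) != EC Lb 1.
Proof.
move=> /andP [H1 H1m] H2 H12 [Ea Ua] [Eb Ub].
rewrite /permcols [nth _ _ 0]/= [nth _ _ 1]/=.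
set r0 := [seq nth dcard ea (s j) | j <- enum 'I_m].
have Hv : v1.-1 < m by rewrite prednK.
have Hin : EC La 1 \in r0.
  apply/(nthP dcard); exists (s^-1 (Ordinal Hv))%g.
    by rewrite size_map size_enum_ord ltn_ord.
  by rewrite nth_enum_map permKV.
have Hi : index (EC La 1) r0 < m by rewrite -index_mem size_map size_enum_ord in Hin.
have := nth_index dcard Hin.
rewrite -[index _ _]/(val (Ordinal Hi)) nth_enum_map => /Ua [_ Es].
rewrite -[index _ _]/(val (Ordinal Hi)) nth_enum_map Es.
apply/eqP => /Ub [_ E]; move: H12; rewrite -(prednK H1) -(prednK H2) E eqxx //.
Qed.

Lemma arrow_core L m sh ea (es : seq (seq Defs.card)) vw : 0 < vw <= m -> L = (2 * m).-1 ->
  encP ea La vw ->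
  (forall e, e \in es -> exists v X, 0 < v < vw /\ encP e X v) ->
  ~~ has (fun row => has (fun t =>
        nth dcard row ((index (EC La 1) (nth [::] (shiftcols L sh (ea :: es)) 0) + t) %% L)
          \in [:: EC Lb 1; EC Lc 1; EC Ld 1])
        (iota 0 m)) (behead (shiftcols L sh (ea :: es))).
Proof.
move=> /andP [H1 Hm] HL [Ea Ua] Hes.
set M := shiftcols L sh (ea :: es).
set i := index (EC La 1) (nth [::] M 0).
have HL0 : 0 < L by rewrite HL; lia.
have HvL : vw.-1 < L by rewrite HL; lia.
set r0 := nth [::] M 0.
have Er0 : r0 = [seq nth dcard ea ((j + sh) %% L) | j <- iota 0 L] by [].
have Hin : EC La 1 \in r0.
  apply/(nthP dcard).
  exists ((vw.-1 + (L - sh %% L)) %% L); first by rewrite Er0 size_map size_iota ltn_pmod.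
  rewrite Er0 (nth_map 0) ?size_iota ?ltn_pmod // nth_iota ?ltn_pmod // add0n.
  rewrite modnDml.
  have Hr := ltn_pmod sh HL0.
  have -> : vw.-1 + (L - sh %% L) + sh = (sh %/ L).+1 * L + vw.-1.
    rewrite {2}(divn_eq sh L) mulSn; move: (sh %/ L * L) (sh %% L) Hr => x y Hr; lia.
  by rewrite modnMDl modn_small.
have Hi : i < L by rewrite /i -/r0 -(size_iota 0 L) -(size_map (fun j => nth dcard ea ((j + sh) %% L))) -Er0 index_mem.
have Ei : (i + sh) %% L = vw.-1.
  have := nth_index dcard Hin; rewrite -/i Er0 (nth_map 0) ?size_iota // nth_iota // add0n.
  by case/Ua.
apply/hasPn => row /mapP [e He ->]; apply/hasPn => t; rewrite mem_iota add0n => /andP [_ Ht].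
rewrite (nth_map 0) ?size_iota ?ltn_pmod // nth_iota ?ltn_pmod // add0n.
rewrite modnDml addnAC -modnDml Ei modn_small; last first.
  rewrite HL; lia.
have [v [X [/andP [Hv0 Hvw] [_ Ue]]]] := Hes e He.
apply/negP => Hmem.
have [Y EY] : exists Y, nth dcard e (vw.-1 + t) = EC Y 1.
  by move: Hmem; rewrite !inE => /or3P [] /eqP ->; eexists.
have [_ Eq] := Ue _ _ EY.
lia.
Qed.

Lemma run_listP (A : Type) (f : A -> state -> bool * state) (l : seq A) pl :
  (forall x k, List.In x l -> exists k', f x (pl, k) = (true, (pl, k'))) ->
  forall k, exists k', run_list f l (pl, k) = (true, (pl, k')).
Proof.
elim: l => [|x l IH] H k /=; first by exists k.
have [k1 ->] := H x k (or_introl erefl).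
have [k2 ->] := IH (fun y k0 Hy => H y k0 (or_intror Hy)) k1.
by exists k2.
Qed.

Lemma in_zip_fst (A : eqType) (B : Type) (s : seq A) (t : seq B) x y :
  List.In (x, y) (zip s t) -> x \in s.
Proof.
elim: s t => [|a s IH] [|b t] //= [[-> _]|H]; first by rewrite inE eqxx.
by rewrite inE (IH t H) orbT.
Qed.

Lemma foldr_max_ge (s : seq nat) x : x \in s -> x <= foldr maxn 0 s.
Proof.
elim: s => [|a s IH] //=; rewrite inE => /orP [/eqP ->|H]; first exact: leq_maxl.
exact: leq_trans (IH H) (leq_maxr _ _).
Qed.

Local Arguments convert : simpl never.

Section Puz.
Variables (P : puzzle) (sol : cell -> nat).
Hypothesis Hwf : wf_puzzle P.
Hypothesis Hsol : is_solution P sol.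

Lemma convertsP tape dl L k : (forall d X, List.In (d, X) dl -> is_white P d) ->
  exists es k', converts P tape dl L (setup P sol, k) = (es, (setup P sol, k')) /\
   forall e, e \in es -> exists d X, List.In (d, X) dl /\ encP e X (sol d).
Proof.
elim: dl k => [|[d X] dl IH] k H; first by exists [::], k.
cbn [converts].
have [e [-> He]] := convertP Hsol tape X L k (H d X (or_introl erefl)).
have [es [k' [-> Hes]]] := IH k.+3 (fun d0 X0 Hin => H d0 X0 (or_intror Hin)).
exists (e :: es), k'; split => // e0; rewrite inE => /orP [/eqP ->|/Hes [d0 [X0 [Hin HH]]]].
  by exists d, X; split => //; left.
by exists d0, X0; split => //; right.
Qed.

Lemma white_pos c : is_white P c -> 0 < sol c <= rsize P c.
Proof.
move=> Hw; have [r [Hr Hrr Hc]] := white_room Hw.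
by rewrite /rsize Hr; apply: sol_range.
Qed.

End Puz.

Local Arguments convert : simpl never.
Local Arguments converts : simpl never.

Lemma In_mem (T : eqType) (x : T) s : List.In x s -> x \in s.
Proof.
elim: s => [|a s IH] //= [->|H]; first by rewrite inE eqxx.
by rewrite inE (IH H) orbT.
Qed.

Lemma step_nbrs P x y : in_grid P y -> y \in pmap (step x) [:: Down; Right] -> y \in nbrs P x.
Proof.
move=> Hg Hy; rewrite /nbrs mem_filter Hg /=.
case: x Hy => [[|i] [|j]] /=; rewrite !inE => /orP [] /eqP ->; by rewrite ?eqxx ?orbT.
Qed.

Section Puz.
Variables (P : puzzle) (sol : cell -> nat).
Hypothesis Hwf : wf_puzzle P.
Hypothesis Hsol : is_solution P sol.

Lemma nbr_checkP tape cd k : cd \in nbr_pairs P ->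
  exists k', nbr_check P tape cd (setup P sol, k) = (true, (setup P sol, k')).
Proof.
rewrite mem_filter => /andP [/and3P [W1 W2 Hne] /allpairsPdep [x [y [Hx Hy Ecd]]]].
subst cd; move: W1 W2 Hne => /= W1 W2 Hne.
have Hn : y \in nbrs P x.
  exact: step_nbrs (white_grid W2) Hy.
have Hneq : sol x != sol y.
  by apply/eqP; case: Hsol => _ [_ [H _]]; apply: H.
rewrite /nbr_check.
set m := maxn _ _.
have [ea [E1 Ha]] := convertP Hsol tape La m k W1.
rewrite E1; cbv beta iota zeta.
have [eb [E2 Hb]] := convertP Hsol tape Lb m k.+3 W2.
rewrite E2; cbv beta iota zeta.
eexists; rewrite (@nbr_core _ _ _ _ (sol x) (sol y)) //.
- have /andP [H0 H1] := white_pos Hsol W1.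
  by rewrite H0 (leq_trans H1 (leq_maxl _ _)).
- by have /andP [] := white_pos Hsol W2.
Qed.

Lemma arrow_checkP tape shifts c k : c \in black_cells P ->
  exists k', arrow_check P tape shifts c (setup P sol, k) = (true, (setup P sol, k')).
Proof.
rewrite mem_filter => /andP [/andP [Hg Hb] _].
rewrite /arrow_check.
case E: (kindf P c) Hb => [r|dr] // _.
have [w [Hst Ww]] := Hwf.1 c dr Hg E.
rewrite Hst [odflt _ _]/=.
set ds := [seq d <- nbrs P c | is_white P d & d != w].
set m := foldr maxn 0 _.
set L := (2 * m).-1.
have [ea [E1 Ha]] := convertP Hsol tape La L k Ww.
rewrite E1; cbv beta iota zeta.
have Hwd : forall d X, List.In (d, X) (zip ds [:: Lb; Lc; Ld]) -> is_white P d.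
  move=> d X Hin; have := in_zip_fst Hin; rewrite mem_filter => /andP [/andP [] //].
have [es [k' [E2 Hes]]] := convertsP Hsol tape L k.+3 Hwd.
rewrite E2; cbv beta iota zeta.
eexists; rewrite (@arrow_core L m _ ea es (sol w)) //.
- have /andP [H0 H1] := white_pos Hsol Ww.
  by rewrite H0 (leq_trans H1) // foldr_max_ge // map_f // mem_head.
- move=> e He; have [d [X [Hin Hd]]] := Hes e He.
  have := in_zip_fst Hin; rewrite mem_filter => /andP [/andP [Wd Hdw] Hdn].
  exists (sol d), X; split => //.
  have /andP [H0 _] := white_pos Hsol Wd.
  rewrite H0 /=.
  by case: Hsol => _ [_ [_ H]]; apply: (H c dr w).
Qed.

End Puz.

Unset Implicit Arguments.

Theorem lemma1 (P : puzzle) (sol : cell -> nat) :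
  wf_puzzle P -> is_solution P sol ->
  forall (tape : tape_t) (shifts : nat -> nat), protocol P sol tape shifts = true.
Proof.
move=> Hwf Hsol tape shifts; rewrite /protocol.
have [k1 ->] := run_listP (f := room_check P tape) (l := rooms P) (pl := setup P sol)
  (fun x k Hx => ex_intro _ _ (room_checkP Hsol tape k (In_mem Hx))) 0.
have [k2 ->] := run_listP (f := nbr_check P tape) (l := nbr_pairs P) (pl := setup P sol)
  (fun x k Hx => nbr_checkP Hsol tape k (In_mem Hx)) k1.
have [k3 ->] := run_listP (f := arrow_check P tape shifts) (l := black_cells P) (pl := setup P sol)
  (fun x k Hx => arrow_checkP Hwf Hsol tape shifts k (In_mem Hx)) k2.
by [].
Qed.
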